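(* Let $U,V$ be Banach spaces with norms $\|\cdot\|_U,\|\cdot\|_V$, and for each $\varepsilon>0$ let $\bar u_\varepsilon\in U$ and $F_\varepsilon\in C^1(U;V)$ be given with $\|F_\varepsilon(\bar u_\varepsilon)\|_V\to0$ as $\varepsilon\to0$. Let $u_0\in U$ be such that there exist $\varepsilon_0>0$ and $c>0$ with: for all $\varepsilon\in(0,\varepsilon_0]$, $F'_\varepsilon(u_0)$ is Fredholm of index zero from $U$ into $V$ and $\|F'_\varepsilon(u_0)u\|_V\ge c\|u\|_U$ for all $u\in U$. Let $\|\cdot\|$ be another norm on $U$ such that (a) $d:=\sup\{\|u\|:\ u\in U,\ \|u\|_U\le1\}<\infty$; (b) $\|\bar u_\varepsilon-u_0\|\to0$ as $\varepsilon\to0$; (c) $\sup_{\|v\|_U\le1}\|(F'_\varepsilon(u_0+u)-F'_\varepsilon(u_0))v\|_V\to0$ as $\varepsilon+\|u\|\to0$. Then there exist $\varepsilon_1\in(0,\varepsilon_0]$ and $\delta>0$ such that for every $\varepsilon\in(0,\varepsilon_1]$ there is exactly one solution $u=u_\varepsilon$ of $F_\varepsilon(u)=0$ with $\|u-u_0\|\le\delta$, and $$\|u_\varepsilon-u_0\|\le\|\bar u_\varepsilon-u_0\|+\frac{3d}{c}\|F_\varepsilon(\bar u_\varepsilon)\|_V.$$ *)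

(* Defs.v *)
From HB Require Import structures.
From mathcomp Require Import all_boot all_order all_algebra.
From mathcomp Require Import all_classical all_reals all_analysis.
Set Implicit Arguments. Unset Strict Implicit. Unset Printing Implicit Defensive.
Import Order.TTheory GRing.Theory Num.Theory.
Import numFieldNormedType.Exports.
Local Open Scope classical_set_scope.
Local Open Scope ring_scope.

Section Defs.
Context {R : realType}.

Definition C1 {U V : normedModType R} (F : U -> V) : Prop :=
  (forall x, differentiable F x) /\
  (forall x (eta : R), 0 < eta -> exists rho : R, 0 < rho /\
     forall y, `|y - x| < rho ->
       forall v : U, `|'d F y v - 'd F x v| <= eta * `|v|).

Definition lin_indep {W : lmodType R} n (k : 'I_n -> W) : Prop :=
  forall a : 'I_n -> R, \sum_(i < n) a i *: k i = 0 -> forall i, a i = 0.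

Definition fspan {W : lmodType R} n (k : 'I_n -> W) : set W :=
  [set w | exists a : 'I_n -> R, w = \sum_(i < n) a i *: k i].

(* L : U -> V is a Fredholm operator of index zero: a bounded linear
   operator with closed range, finite-dimensional kernel, and range of
   finite codimension, with dim ker L = codim ran L (= n). The codimension
   is witnessed by an algebraic complement of the range of dimension n. *)
Definition Fredholm0 {U V : normedModType R} (L : U -> V) : Prop :=
  (forall (a : R) (u v : U), L (a *: u + v) = a *: L u + L v) /\
  continuous L /\
  closed (range L) /\
  exists n (k : 'I_n -> U) (w : 'I_n -> V),
    lin_indep k /\ [set u | L u = 0] = fspan k /\
    lin_indep w /\
    (forall y : V, exists u (a : 'I_n -> R), y = L u + \sum_(i < n) a i *: w i) /\
    (forall y : V, range L y -> fspan w y -> y = 0).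

Definition is_norm {U : lmodType R} (N : U -> R) : Prop :=
  (forall u, N u = 0 -> u = 0) /\
  (forall (a : R) u, N (a *: u) = `|a| * N u) /\
  (forall u v, N (u + v) <= N u + N v).

End Defs.

(* Main.v *)
Require Import Defs.
From HB Require Import structures.
From mathcomp Require Import all_boot all_order all_algebra.
From mathcomp Require Import all_classical all_reals all_analysis.
From mathcomp Require Import ring lra.
Import Order.TTheory GRing.Theory Num.Theory.
Import numFieldNormedType.Exports.
Local Open Scope classical_set_scope.
Local Open Scope ring_scope.


Lemma grp_id (V : zmodType) (A B D x y : V) : A - x - (B - y) = A - B - D + (D - (x - y)).
Proof. rewrite addrA subrK !opprB !addrA.
by rewrite [A - x + y]addrAC [A + y - x - B]addrAC [A + y - B]addrAC.
Qed.

Lemma frechet (R : realType) (U V : normedModType R) (F : U -> V) x :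
  differentiable F x -> forall eps : R, 0 < eps -> exists r : R, 0 < r /\
  forall k, `|k| < r -> `|F (x + k) - F x - 'd F x k| <= eps * `|k|.
Proof.
move=> /diff_locally /eqaddoP H eps eps0.
have := H eps eps0.
move=> /nbhs_normP [r /= r0 Hr]; exists r; split => // k kr.
have := Hr k; rewrite /ball_ /= sub0r normrN => /(_ kr) /=.
by rewrite !fctE /= [k + x]addrC opprD addrA.
Qed.

Arguments frechet {R U V F x}.

Lemma mvi (R : realType) (U V : normedModType R) (F : U -> V)
  (L : {linear U -> V}) (w h : U) (eta : R) :
  (forall t : R, 0 <= t <= 1 -> differentiable F (w + t *: h)) ->
  (forall t : R, 0 <= t <= 1 -> forall v, `|'d F (w + t *: h) v - L v| <= eta * `|v|) ->
  `|F (w + h) - F w - L h| <= eta * `|h|.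
Proof.
move=> dF bd.
have [->|h0] := eqVneq h 0.
  by rewrite addr0 subrr linear0 subr0 !normr0 mulr0.
have hpos : 0 < `|h| by rewrite normr_gt0.
apply/ler_addgt0Pr => e e0.
pose eps := e / `|h|.
have eps0 : 0 < eps by rewrite divr_gt0.
pose K := (eta + eps) * `|h|.
have KE : K = eta * `|h| + e by rewrite /K mulrDl /eps divfK // gt_eqF.
rewrite -KE.
pose phi t := F (w + t *: h) - t *: L h.
have loc : forall s, 0 <= s <= 1 -> exists r, 0 < r /\
    forall t, `|t - s| < r -> `|phi t - phi s| <= K * `|t - s|.
  move=> s s01; have [r' [r'0 Hr']] := frechet (dF s s01) _ eps0.
  exists (r' / `|h|); split; first by rewrite divr_gt0.
  move=> t ts.
  have kr : `|(t - s) *: h| < r' by rewrite normrZ -ltr_pdivlMr.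
  have H1 := Hr' _ kr.
  have H2 := bd s s01 ((t - s) *: h).
  have E : phi t - phi s =
    (F (w + s *: h + (t - s) *: h) - F (w + s *: h) - 'd F (w + s *: h) ((t - s) *: h))
    + ('d F (w + s *: h) ((t - s) *: h) - L ((t - s) *: h)).
    have -> : w + s *: h + (t - s) *: h = w + t *: h.
      by rewrite -addrA -scalerDl [s + _]addrC subrK.
    have -> : L ((t - s) *: h) = t *: L h - s *: L h.
      by rewrite scalerBl linearB !linearZ.
    exact: grp_id.
  rewrite E; apply: le_trans (ler_normD _ _) _.
  move: H1 H2; rewrite normrZ /K => H1 H2.
  set a := `|t - s| * `|h| in H1 H2 *.
  have -> : (eta + eps) * `|h| * `|t - s| = eps * a + eta * a.
    by rewrite /a; ring.
  exact: lerD.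
pose A := [set t : R | (0 <= t <= 1) /\ `|phi t - phi 0| <= K * t].
have A0 : A 0 by split; [rewrite lexx ler01 | rewrite subrr normr0 mulr0].
have hsA : has_sup A by split; [exists 0 | exists 1 => t [/andP[_ ?] _]].
have s0 : 0 <= sup A by apply: sup_upper_bound.
have s1 : sup A <= 1 by apply: ge_sup; [exists 0| move=> t [/andP[_ ?] _]].
have s01 : 0 <= sup A <= 1 by rewrite s0 s1.
have [r [r0 Hr]] := loc _ s01.
have As : A (sup A).
  have [t At st] := sup_adherent r0 hsA.
  have ts : t <= sup A by apply: sup_upper_bound.
  split => //.
  apply: le_trans (ler_distD (phi t) _ _) _.
  have tsr : `|t - sup A| < r by rewrite distrC ger0_norm ?subr_ge0 //; lra.
  have H1 := Hr _ tsr.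
  move: H1; rewrite distrC [`|t - _|]distrC ger0_norm ?subr_ge0 // => H1.
  case: At => _ H2.
  have -> : K * sup A = K * (sup A - t) + K * t by ring.
  exact: lerD.
have s_eq1 : sup A = 1.
  apply/eqP; rewrite eq_le s1 /= leNgt; apply/negP => s_lt1.
  pose t' := Num.min (sup A + r / 2) 1.
  have st' : sup A < t' by rewrite lt_min s_lt1 andbT ltrDl divr_gt0.
  have t'r : t' - sup A <= r / 2 by rewrite lerBlDl ge_min lexx.
  have At' : A t'.
    split; first by rewrite ge_min lexx orbT andbT; lra.
    apply: le_trans (ler_distD (phi (sup A)) _ _) _.
    have tpos : 0 <= t' - sup A by rewrite subr_ge0 ltW.
    have H1 : `|phi t' - phi (sup A)| <= K * (t' - sup A).
      rewrite -[in X in _ <= X](ger0_norm tpos); apply: Hr; rewrite ger0_norm //; lra.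
    case: As => _ H2.
    have -> : K * t' = K * (t' - sup A) + K * sup A by ring.
    exact: lerD.
  have := sup_upper_bound hsA At'; lra.
case: As; rewrite s_eq1 /phi !scale1r !scale0r addr0 subr0 mulr1 => _.
by rewrite addrAC.
Qed.


Lemma lip_continuous (R : realType) (U : normedModType R) (M : U -> R) (d : R) :
  (forall x y, M x - M y <= d * `|x - y|) -> continuous M.
Proof.
move=> HM x; apply/cvgrPdist_lt => eps eps0.
apply/nbhs_normP; exists (eps / (`|d| + 1)); first by apply: divr_gt0 => //; rewrite ltr_wpDl.
move=> y; rewrite /ball_ /= => xy.
have h1 := HM x y; have h2 := HM y x.
rewrite distrC in h2.
have dle : d <= `|d| := ler_norm d.
have nn : 0 <= `|x - y| := normr_ge0 _.
have : `|x - y| * (`|d| + 1) < eps by rewrite -ltr_pdivlMr // ltr_wpDl.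
move=> H.
rewrite ltr_norml; apply/andP; split.
- have : d * `|x - y| <= `|d| * `|x - y| by rewrite ler_wpM2r.
  move=> H3; nra.
- have : d * `|x - y| <= `|d| * `|x - y| by rewrite ler_wpM2r.
  move=> H3; nra.
Qed.

Lemma norm_facts (R : realType) (U : normedModType R) (N : U -> R) :
  is_norm N -> (N 0 = 0) /\ (forall x, N (- x) = N x) /\ (forall x, 0 <= N x) /\
  (forall x y, N (x + y) <= N x + N y).
Proof.
move=> [N0 [NZ ND]].
have N00 : N 0 = 0 by rewrite -(scale0r (0 : U)) NZ normr0 mul0r.
have NN x : N (- x) = N x by rewrite -scaleN1r NZ normrN normr1 mul1r.
split => //; split => //; split => // x.
have := ND x (- x); rewrite subrr N00 NN => H.
have : 0 <= N x + N x by [].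
move=> H2; lra.
Qed.

Arguments norm_facts {R U N}.

Lemma grp_id2 (V : zmodType) (w b c e g : V) :
  w + (b - c) - e = w - c - (e - g) + (b - g).
Proof.
rewrite opprB !addrA [w - c + g - e]addrAC [w - c - e + g + b]addrAC addrK.
by rewrite [w + b - c]addrAC [w - c + b - e]addrAC.
Qed.

Lemma grp_id3 (V : zmodType) (a x b y : V) :
  a - x - (b - y) = - (x - y - (a - b)).
Proof.
rewrite !opprB !addrA.
by rewrite [a - x + y]addrAC [a + y - x - b]addrAC [a + y - b]addrAC.
Qed.

Lemma core (R : realType) (U V : completeNormedModType R) (f : U -> V)
  (L : {linear U -> V}) (N : U -> R) (u0 ub : U) (c d delta : R) :
  0 < c -> 0 <= d -> is_norm N ->
  (forall x, N x <= d * `|x|) ->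
  (forall u, c * `|u| <= `|L u|) -> (forall y, exists u, L u = y) ->
  (forall x, differentiable f x) ->
  (forall x, N (x - u0) <= delta -> forall v, `|'d f x v - L v| <= c / 2 * `|v|) ->
  N (ub - u0) + 2 * d / c * `|f ub| <= delta ->
  exists u, f u = 0 /\ N (u - u0) <= delta /\
    (forall w, f w = 0 -> N (w - u0) <= delta -> w = u) /\
    N (u - u0) <= N (ub - u0) + 3 * d / c * `|f ub|.
Proof.
move=> c0 d0 Nn Nd Lc Ls df dbd ubd.
have [N0 [NN [Nge0 ND]]] := norm_facts Nn.
have NZ : forall (a : R) u, N (a *: u) = `|a| * N u by case: Nn => _ [].
pose Linv y := projT1 (cid (Ls y)).
have LK y : L (Linv y) = y by rewrite /Linv; case: (cid _).
have Lb y : `|Linv y| <= `|y| / c.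
  by rewrite ler_pdivlMr // mulrC -{2}(LK y) Lc.
pose G u := u - Linv (f u).
have contr u w : N (u - u0) <= delta -> N (w - u0) <= delta ->
    `|G u - G w| <= 2^-1 * `|u - w|.
  move=> Hu Hw.
  have H : `|f (w + (u - w)) - f w - L (u - w)| <= c / 2 * `|u - w|.
    apply: mvi => t /andP[t0 t1]; first exact: df.
    apply: dbd.
    have -> : w + t *: (u - w) - u0 = (1 - t) *: (w - u0) + t *: (u - u0).
      by rewrite !scalerBr !scalerBl !scale1r; apply: grp_id2.
    apply: le_trans (ND _ _) _.
    rewrite !NZ !ger0_norm ?subr_ge0 //.
    have t1' : 0 <= 1 - t by rewrite subr_ge0.
    have := ler_wpM2l t0 Hu; have := ler_wpM2l t1' Hw.
    move=> H1 H2; have := lerD H1 H2.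
    by have -> : (1 - t) * delta + t * delta = delta by ring.
  have E : L (G u - G w) = - (f (w + (u - w)) - f w - L (u - w)).
    have LB : forall a b, L (a - b) = L a - L b by move=> a b; rewrite raddfB.
    by rewrite /G [w + (u - w)]addrC subrK !LB !LK grp_id3.
  have := Lc (G u - G w); rewrite E normrN => H2.
  have H3 := le_trans H2 H.
  move: H3; have -> : c / 2 * `|u - w| = c * (2^-1 * `|u - w|) by ring.
  by rewrite ler_pM2l.
have Linv0 : Linv 0 = 0.
  by have := Lb 0; rewrite normr0 mul0r normr_le0 => /eqP.
have fixP u : G u = u <-> f u = 0.
  split.
    move=> /(congr1 (fun z => u - z)); rewrite /G subKr subrr => H0.
    by rewrite -(LK (f u)) H0 linear0.
  by move=> H0; rewrite /G H0 Linv0 subr0.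
pose r := 2 * (`|f ub| / c).
pose S := [set u | N (u - u0) <= delta /\ `|u - ub| <= r].
have fubc : 0 <= `|f ub| / c by rewrite divr_ge0 // ltW.
have h0 : 0 <= 2 * d / c * `|f ub|.
  apply: mulr_ge0 => //; apply: divr_ge0; [exact: mulr_ge0 | exact: ltW].
have Ndub : N (ub - u0) <= delta by lra.
have GubS : `|G ub - ub| <= `|f ub| / c.
  by rewrite /G addrAC subrr add0r normrN Lb.
have Ntri x y z : N (x - z) <= N (x - y) + N (y - z).
  have -> : x - z = (x - y) + (y - z) by rewrite addrA subrK.
  exact: ND.
have GS : {homo G : u / S u >-> S u}.
  move=> u [Hu1 Hu2].
  have H1 : `|G u - ub| <= r.
    have T1 := ler_distD (G ub) (G u) ub.
    have T2 := contr u ub Hu1 Ndub.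
    rewrite /r in Hu2 *; lra.
  split => //.
  apply: le_trans (Ntri _ ub _) _.
  have T3 : N (G u - ub) <= d * r by apply: le_trans (Nd _) _; rewrite ler_wpM2l.
  have : d * r = 2 * d / c * `|f ub| by rewrite /r; ring.
  lra.
have clS : closed S.
  have -> : S = (fun u => N (u - u0)) @^-1` [set x | x <= delta] `&`
               (fun u => `|u - ub|) @^-1` [set x | x <= r] by [].
  apply: closedI; apply: preimage_closed; try exact: closed_le.
  - move=> x _; apply: (@lip_continuous _ _ _ d) => a b.
    have := Ntri a b u0; have := Nd (a - b); lra.
  - move=> x _; apply: (@lip_continuous _ _ _ 1) => a b.
    by rewrite mul1r lerBlDr ler_distD.
have neS : S !=set0.
  by exists ub; split => //; rewrite subrr normr0 /r mulr_ge0.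
have ctr : is_contraction (mkfun_fun GS).
  exists (2^-1)%:nng; split; first by rewrite /= invf_lt1 // ltr1n.
  move=> [a b] [Sa Sb] /=; rewrite /mkfun.
  by apply: contr; [case: Sa | case: Sb].
have [p Sp pG] := banach_fixed_point ctr clS neS.
have fp0 : f p = 0 by apply/fixP; exact: (esym pG).
exists p; split => //; split; first by case: Sp.
split.
  move=> w fw Nw.
  have Gw : G w = w by apply/fixP.
  have Gp : G p = p by apply/fixP.
  have := contr w p Nw ltac:(by case: Sp); rewrite Gw Gp => H.
  have : `|w - p| <= 0 by lra.
  by rewrite normr_le0 subr_eq0 => /eqP.
apply: le_trans (Ntri _ ub _) _.
case: Sp => _ Sp2.
have T3 : N (p - ub) <= d * r by apply: le_trans (Nd _) _; rewrite ler_wpM2l.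
have : d * r = 2 * d / c * `|f ub| by rewrite /r; ring.
have : 0 <= d / c * `|f ub| by rewrite mulr_ge0 // divr_ge0 // ltW.
have : 3 * d / c * `|f ub| = 3 * (d / c * `|f ub|) by ring.
have : 2 * d / c * `|f ub| = 2 * (d / c * `|f ub|) by ring.
lra.
Qed.


Lemma near_right0 (R : realType) (P : R -> Prop) :
  (\forall y \near 0^'+, P y) -> exists r : R, 0 < r /\ forall y, 0 < y -> y <= r -> P y.
Proof.
rewrite near_withinE => /nbhs_normP [r /= r0 Hr].
exists (r / 2); split; first by rewrite divr_gt0.
move=> y y0 yr; apply: Hr => //=.
rewrite /ball_ /= sub0r normrN gtr0_norm //; lra.
Qed.

Lemma cvg_right0 (R : realType) (g : R -> R) :
  g x @[x --> 0^'+] --> 0 -> forall eps : R, 0 < eps ->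
  exists r : R, 0 < r /\ forall y, 0 < y -> y <= r -> `|g y| < eps.
Proof.
move=> /cvgrPdist_lt H eps eps0; apply: near_right0.
by apply: filterS (H _ eps0) => y; rewrite sub0r normrN.
Qed.


Arguments cvg_right0 {R g}.

Lemma fred_surj (R : realType) (U V : normedModType R) (L : U -> V) (c : R) :
  0 < c -> Fredholm0 L -> (forall u, c * `|u| <= `|L u|) ->
  forall y, exists u, L u = y.
Proof.
move=> c0 [Llin [_ [_ [n [k [w [kind [ker [_ [span _]]]]]]]]]] Lc y.
case: n k w kind ker span => [|n] k w kind ker span.
  have [u [a ->]] := span y; exists u.
  by rewrite big_ord0 addr0.
exfalso.
have Hk : fspan k (\sum_(i < n.+1) 1 *: k i) by exists (fun=> 1).
rewrite -ker /= in Hk.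
have s0 : \sum_(i < n.+1) 1 *: k i = 0.
  have := Lc (\sum_(i < n.+1) 1 *: k i); rewrite Hk normr0.
  rewrite pmulr_rle0 // normr_le0 => /eqP //.
have := kind (fun=> 1) s0 ord0.
by move/eqP; rewrite oner_eq0.
Qed.

Arguments fred_surj {R U V L c}.

Lemma unit_scale (R : realType) (U V : normedModType R) (A B : {linear U -> V}) (K : R) :
  (forall v, `|v| <= 1 -> `|A v - B v| <= K) -> forall v, `|A v - B v| <= K * `|v|.
Proof.
move=> H v.
have [->|v0] := eqVneq v 0.
  by rewrite !linear0 ?subr0 ?addr0 !normr0 mulr0.
have vp : 0 < `|v| by rewrite normr_gt0.
have := H (`|v|^-1 *: v).
rewrite normrZ normrV ?unitfE ?normr_eq0 // normr_id mulVf ?normr_eq0 // lexx.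
move=> /(_ isT); rewrite !linearZ /= -scalerDr normrZ normrV ?unitfE ?normr_eq0 //.
rewrite normr_id mulrC -ler_pdivlMr ?invr_gt0 // => H2.
by move: H2; rewrite invrK.
Qed.

Theorem corollary2p3 (R : realType) (U V : completeNormedModType R)
  (ubar : R -> U) (F : R -> U -> V) (u0 : U) (eps0 c : R) (N : U -> R) :
  (forall e, 0 < e -> C1 (F e)) ->
  (fun e => `|F e (ubar e)|) @ 0^'+ --> 0 ->
  0 < eps0 -> 0 < c ->
  (forall e, 0 < e -> e <= eps0 ->
     Fredholm0 ('d (F e) u0) /\ (forall u : U, c * `|u| <= `|'d (F e) u0 u|)) ->
  is_norm N ->
  (* (a) *)
  has_ubound [set N u | u in [set u : U | `|u| <= 1]] ->
  (* (b) *)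
  (fun e => N (ubar e - u0)) @ 0^'+ --> 0 ->
  (* (c) *)
  (forall eta : R, 0 < eta -> exists rho : R, 0 < rho /\
     forall (e : R) (u : U), 0 < e -> e + N u < rho ->
       forall v : U, `|v| <= 1 ->
         `|'d (F e) (u0 + u) v - 'd (F e) u0 v| <= eta) ->
  let d := sup [set N u | u in [set u : U | `|u| <= 1]] in
  exists eps1 : R, 0 < eps1 /\ eps1 <= eps0 /\
  exists delta : R, 0 < delta /\
  forall e : R, 0 < e -> e <= eps1 ->
    exists u : U, F e u = 0 /\ N (u - u0) <= delta /\
      (forall w : U, F e w = 0 -> N (w - u0) <= delta -> w = u) /\
      N (u - u0) <= N (ubar e - u0) + (3 * d / c) * `|F e (ubar e)|.
Proof.
move=> HC1 Hlim eps00 c0 HFr Nn Hub Hb Hc d.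
have [N0 [NN [Nge0 ND]]] := norm_facts Nn.
have NZ : forall (a : R) u, N (a *: u) = `|a| * N u by case: Nn => _ [].
have hsE : has_sup [set N u | u in [set u : U | `|u| <= 1]].
  by split => //; exists (N 0), 0 => //=; rewrite normr0 ler01.
have d0 : 0 <= d.
  by rewrite -N0; apply: sup_upper_bound => //; exists 0 => //=; rewrite normr0 ler01.
have Nd x : N x <= d * `|x|.
  have [->|x0] := eqVneq x 0; first by rewrite N0 normr0 mulr0.
  have xp : 0 < `|x| by rewrite normr_gt0.
  have : N (`|x|^-1 *: x) <= d.
    apply: sup_upper_bound => //; exists (`|x|^-1 *: x) => //=.
    by rewrite normrZ normrV ?unitfE ?normr_eq0 // normr_id mulVf ?normr_eq0.
  rewrite NZ normrV ?unitfE ?normr_eq0 // normr_id mulrC -ler_pdivlMr ?invr_gt0 //.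
  by rewrite invrK mulrC.
have [rho [rho0 Hrho]] := Hc (c / 2) ltac:(by rewrite divr_gt0).
pose delta := rho / 2.
have delta0 : 0 < delta by rewrite divr_gt0.
have [r1 [r10 Hr1]] := cvg_right0 Hb (delta / 2) ltac:(by rewrite divr_gt0).
pose K := 2 * d / c.
have K0 : 0 <= K by apply: mulr_ge0; [exact: mulr_ge0 | rewrite invr_ge0 ltW].
pose eps2 := delta / 2 / (K + 1).
have eps20 : 0 < eps2 by apply: divr_gt0; [rewrite divr_gt0 | rewrite ltr_wpDl].
have [r2 [r20 Hr2]] := cvg_right0 Hlim eps2 eps20.
pose eps1 := Num.min (Num.min eps0 (rho / 4)) (Num.min r1 r2).
have eps10 : 0 < eps1.
  by rewrite !lt_min eps00 r10 r20 divr_gt0.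
exists eps1; split => //; split; first by rewrite /eps1 !ge_min lexx.
exists delta; split => //.
move=> e e0 e1.
have ee0 : e <= eps0 by move: e1; rewrite /eps1 !le_min => /andP[/andP[]].
have erho : e <= rho / 4 by move: e1; rewrite /eps1 !le_min => /andP[/andP[]].
have er1 : e <= r1 by move: e1; rewrite /eps1 !le_min => /andP[_ /andP[]].
have er2 : e <= r2 by move: e1; rewrite /eps1 !le_min => /andP[_ /andP[]].
have [Hfr Lc] := HFr e e0 ee0.
apply: core => //.
- exact: fred_surj Hfr Lc.
- by case: (HC1 e e0).
- move=> x Hx; apply: unit_scale => v v1.
  have := Hrho e (x - u0) e0 ltac:(rewrite /delta in Hx; lra) v v1.
  by rewrite [u0 + _]addrC subrK.
- have H1 := Hr1 e e0 er1; have H2 := Hr2 e e0 er2.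
  rewrite ger0_norm // in H1; rewrite normr_id in H2.
  have H3 : K * `|F e (ubar e)| <= K * eps2 by rewrite ler_wpM2l // ltW.
  have H4 : K * eps2 <= delta / 2.
    rewrite /eps2 mulrA ler_pdivrMr ?ltr_wpDl //.
    have : 0 <= delta / 2 by rewrite divr_ge0 // ltW.
    move=> ?; nra.
  rewrite -/K; lra.
Qed.
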